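(* Let $\mathrm{Cir}_9$ be the graph with vertex set $\{1,\dots,9\}$ whose maximal stable sets are exactly $\{1,2,3\},\{4,5,6\},\{7,8,9\},\{1,4,7\},\{3,6,9\}$ (so two distinct vertices are non-adjacent iff they lie together in one of these sets). Then $\mathrm{Cir}_9$ is triangle but not $\cup$-equistable.
   Context: A graph $G$ is triangle if for every maximal stable set $S$ of $G$ and every edge $uv$ of $G$ with $u,v\notin S$, there is $s\in S$ adjacent to both $u$ and $v$. A graph $G=(V,E)$ is equistable if there is $\varphi:V\to\mathbb R_+$ such that for all $S\subseteq V$, $S$ is a maximal stable set iff $\sum_{v\in S}\varphi(v)=1$. A graph is $\cup$-equistable if it or its complement is equistable. *)

(* Defs.v *)
From HB Require Import structures.
From mathcomp Require Import all_boot all_order all_algebra.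
From mathcomp Require Import Rstruct.
From Stdlib Require Import Reals.
Set Implicit Arguments. Unset Strict Implicit. Unset Printing Implicit Defensive.
Import Order.TTheory GRing.Theory Num.Theory.

Definition simple_graph (T : finType) (e : rel T) : Prop :=
  irreflexive e /\ symmetric e.

Definition stable (T : finType) (e : rel T) (S : {set T}) : bool :=
  [forall x in S, forall y in S, ~~ e x y].

Definition maximal_stable (T : finType) (e : rel T) (S : {set T}) : bool :=
  maxset (stable e) S.

Definition triangle_graph (T : finType) (e : rel T) : Prop :=
  forall S : {set T}, maximal_stable e S ->
  forall u v : T, e u v -> u \notin S -> v \notin S ->
  exists s, [/\ s \in S, e s u & e s v].

Local Open Scope ring_scope.
Definition equistable (T : finType) (e : rel T) : Prop :=
  exists phi : T -> R,
    (forall v, 0 <= phi v) /\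
    (forall S : {set T}, maximal_stable e S <-> \sum_(v in S) phi v = 1).

Local Close Scope ring_scope.

Definition complement_graph (T : finType) (e : rel T) : rel T :=
  fun x y => (x != y) && ~~ e x y.

Definition cup_equistable (T : finType) (e : rel T) : Prop :=
  equistable e \/ equistable (complement_graph e).

(* Cir_9: vertices 1..9 encoded as 0..8 in 'I_9 (vertex k+1 <-> ordinal k).
   Two distinct vertices are non-adjacent iff they lie together in one of
   {1,2,3},{4,5,6},{7,8,9},{1,4,7},{3,6,9}. *)
Definition cir9_blocks : seq (seq nat) :=
  [:: [:: 0; 1; 2]; [:: 3; 4; 5]; [:: 6; 7; 8]; [:: 0; 3; 6]; [:: 2; 5; 8]].

Definition cir9 : rel 'I_9 :=
  fun x y => (x != y) &&
    ~~ has (fun b : seq nat => (nat_of_ord x \in b) && (nat_of_ord y \in b)) cir9_blocks.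

(* Main.v *)
Require Import Defs.
From HB Require Import structures.
From mathcomp Require Import all_boot all_order all_algebra.
From mathcomp Require Import Rstruct lra.
From Stdlib Require Import Reals.
Set Implicit Arguments. Unset Strict Implicit. Unset Printing Implicit Defensive.
Import Order.TTheory GRing.Theory Num.Theory.

Definition blk (b : seq nat) : {set 'I_9} := [set x : 'I_9 | val x \in b].
Definition all9 (P : pred nat) := all P (iota 0 9).
Lemma all9P (P : pred nat) : all9 P -> forall x : 'I_9, P x.
Proof. move=> /allP H x; apply: H; by rewrite mem_iota ltn_ord. Qed.
Lemma has9P (P : pred nat) : has P (iota 0 9) -> exists x : 'I_9, P x.
Proof.
move=> /hasP [x]; rewrite mem_iota add0n => /andP [_ x9] Px.
by exists (Ordinal x9).
Qed.

Definition cir9n (m n : nat) := (m != n) &&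
  ~~ has (fun b : seq nat => (m \in b) && (n \in b)) cir9_blocks.
Definition compn (m n : nat) := (m != n) && ~~ cir9n m n.
Lemma cir9E (x y : 'I_9) : cir9 x y = cir9n x y. Proof. by []. Qed.
Lemma compE (x y : 'I_9) : complement_graph cir9 x y = compn x y. Proof. by []. Qed.

Section Gen.
Variables (e : rel 'I_9) (en : rel nat) (eE : forall x y, e x y = en x y).

Lemma stable_blk b : all9 (fun x => all9 (fun y => (x \in b) ==> (y \in b) ==> ~~ en x y)) ->
  stable e (blk b).
Proof.
move=> H; apply/forallP => x; apply/implyP; rewrite inE => xb.
apply/forallP => y; apply/implyP; rewrite inE => yb.
by rewrite eE; move: (all9P (all9P H x) y); rewrite xb yb.
Qed.

Lemma max_blk b : all9 (fun x => all9 (fun y => (x \in b) ==> (y \in b) ==> ~~ en x y)) ->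
  all9 (fun x => (x \notin b) ==> has (fun a => (a \in b) && en a x) (iota 0 9)) ->
  maximal_stable e (blk b).
Proof.
move=> Hs Hd; apply/maxsetP; split; first exact: stable_blk.
move=> B stB sAB; apply/eqP; rewrite eqEsubset sAB andbT; apply/subsetP => x xB.
apply/negPn/negP => xA.
have := all9P Hd x; rewrite inE in xA; rewrite xA => /implyP /(_ isT) /has9P [a /andP [ab eax]].
have aB : a \in B by apply: (subsetP sAB); rewrite inE.
move/forallP: stB => /(_ a); rewrite aB /= => /forallP /(_ x); rewrite xB /=.
by rewrite eE eax.
Qed.

Lemma not_stable (S : {set 'I_9}) (x y : 'I_9) : x \in S -> y \in S -> e x y -> ~ maximal_stable e S.
Proof.
move=> xS yS exy /maxsetp /forallP /(_ x); rewrite xS /= => /forallP /(_ y).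
by rewrite yS exy.
Qed.
End Gen.

Definition stab9 (f : nat -> bool) :=
  all (fun x => all (fun y => f x ==> f y ==> ~~ cir9n x y) (iota 0 9)) (iota 0 9).
Definition inblk (f : nat -> bool) :=
  has (fun b => all (fun x => f x ==> (x \in b)) (iota 0 9)) cir9_blocks.

Lemma brute0 b0 b1 b2 b3 b4 b5 b6 b7 b8 :
  let f := nth false [:: b0; b1; b2; b3; b4; b5; b6; b7; b8] in stab9 f -> inblk f.
Proof.
by case: b0; case: b1; case: b2; case: b3; case: b4; case: b5; case: b6; case: b7; case: b8.
Qed.

Lemma brute f : stab9 f -> inblk f.
Proof.
have E1 : stab9 f = stab9 (nth false [:: f 0; f 1; f 2; f 3; f 4; f 5; f 6; f 7; f 8]%N) by [].
have E2 : inblk f = inblk (nth false [:: f 0; f 1; f 2; f 3; f 4; f 5; f 6; f 7; f 8]%N) by [].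
rewrite E1 E2; exact: brute0.
Qed.

Lemma max_is_blk (S : {set 'I_9}) : maximal_stable cir9 S ->
  exists2 b, b \in cir9_blocks & S = blk b.
Proof.
move=> mS; have stS := maxsetp mS.
pose f x := (x < 9) && (inord x \in S).
have : stab9 f.
  apply/allP => x _; apply/allP => y _; rewrite /f.
  apply/implyP => /andP [x9 xS]; apply/implyP => /andP [y9 yS].
  move/forallP: stS => /(_ (inord x)); rewrite xS /= => /forallP /(_ (inord y)).
  by rewrite yS /= cir9E !inordK.
move=> /brute /hasP [b bB Hb]; exists b => //.
have sSB : S \subset blk b.
  apply/subsetP => s sS; rewrite inE.
  move/allP: Hb => /(_ (val s)); rewrite mem_iota ltn_ord /f ltn_ord inord_val sS.
  by move=> /(_ isT).
have stB : stable cir9 (blk b).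
  apply: (stable_blk cir9E).
  have : all (fun b => all9 (fun x => all9 (fun y => (x \in b) ==> (y \in b) ==> ~~ cir9n x y))) cir9_blocks by [].
  by move/allP => /(_ b bB).
by move/maxsetP: mS => [_ /(_ _ stB sSB)].
Qed.

Definition tri_ok (b : seq nat) := all9 (fun u => all9 (fun v =>
  cir9n u v ==> (u \notin b) ==> (v \notin b) ==>
  has (fun s => [&& s \in b, cir9n s u & cir9n s v]) (iota 0 9))).

Lemma triangle_part : triangle_graph cir9.
Proof.
move=> S /max_is_blk [b bB ->] u v euv uS vS.
have : tri_ok b.
  have : all tri_ok cir9_blocks by [].
  by move/allP => /(_ b bB).
move=> /all9P /(_ u) /all9P /(_ v); rewrite -cir9E euv.
rewrite inE in uS; rewrite inE in vS; rewrite uS vS => /implyP /(_ isT) /implyP /(_ isT) /implyP /(_ isT) /has9P [s /and3P [sb esu esv]].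
by exists s; rewrite inE sb.
Qed.

Local Open Scope ring_scope.
Lemma sumblk (phi : 'I_9 -> R) b :
  \sum_(v in blk b) phi v = \sum_(i < 9) (if val i \in b then phi i else 0).
Proof. rewrite big_mkcond; apply eq_bigr => i _; by rewrite inE. Qed.

Lemma not_eq1 : ~ equistable cir9.
Proof.
move=> [phi [_ H]].
have M b : all9 (fun x => all9 (fun y => (x \in b) ==> (y \in b) ==> ~~ cir9n x y)) ->
  all9 (fun x => (x \notin b) ==> has (fun a => (a \in b) && cir9n a x) (iota 0 9)) ->
  \sum_(v in blk b) phi v = 1.
  by move=> h1 h2; apply/H; apply: (max_blk cir9E).
have h1 := M [:: 0; 1; 2]%N isT isT.
have h2 := M [:: 3; 4; 5]%N isT isT.
have h3 := M [:: 6; 7; 8]%N isT isT.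
have h4 := M [:: 0; 3; 6]%N isT isT.
have h5 := M [:: 2; 5; 8]%N isT isT.
have h6 : \sum_(v in blk [:: 1; 4; 7]%N) phi v = 1.
  move: h1 h2 h3 h4 h5; rewrite !sumblk !big_ord_recl !big_ord0 /=; lra.
move/H: h6; apply: (@not_stable cir9 _ (@Ordinal 9 1 isT) (@Ordinal 9 4 isT)); by rewrite ?inE.
Qed.

Lemma not_eq2 : ~ equistable (complement_graph cir9).
Proof.
move=> [phi [_ H]].
have M b : all9 (fun x => all9 (fun y => (x \in b) ==> (y \in b) ==> ~~ compn x y)) ->
  all9 (fun x => (x \notin b) ==> has (fun a => (a \in b) && compn a x) (iota 0 9)) ->
  \sum_(v in blk b) phi v = 1.
  by move=> h1 h2; apply/H; apply: (max_blk compE).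
have h1 := M [:: 0; 4; 7]%N isT isT.
have h2 := M [:: 1; 3; 7]%N isT isT.
have h3 := M [:: 1; 4; 7]%N isT isT.
have h6 : \sum_(v in blk [:: 0; 3; 7]%N) phi v = 1.
  move: h1 h2 h3; rewrite !sumblk !big_ord_recl !big_ord0 /=; lra.
move/H: h6; apply: (@not_stable (complement_graph cir9) _ (@Ordinal 9 0 isT) (@Ordinal 9 3 isT)); by rewrite ?inE.
Qed.
Local Close Scope ring_scope.

Theorem proposition41 : triangle_graph cir9 /\ ~ cup_equistable cir9.
Proof. split; first exact: triangle_part. by case; [exact: not_eq1 | exact: not_eq2]. Qed.
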